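(* For all nonnegative integers $i,j$, \[ l_i(t)\,l_j(t) = \sum_{k\geq 0} n_{i,j,k}\, l_k(t), \] where the polynomials $l_k(t)$ and the numbers $n_{i,j,k}$ are as defined in the context.
   Context: The polynomials $l_k(t)$, $k\ge 0$, are defined by the generating function $\sum_{k=0}^\infty l_k(t)x^k = e^{tx/(1+x)}$. Equivalently, $l_k(t)=(-1)^k L_k^{(-1)}(t)$, where $L_k^{(\alpha)}(t)=\sum_{i=0}^k(-1)^i\binom{k+\alpha}{k-i}\frac{t^i}{i!}$ are the generalized Laguerre polynomials. For example, $l_0=1$, $l_1=t$, $l_2=\tfrac12t^2-t$. A word is a finite sequence of letters; a word is Carlitz if no two adjacent letters are equal. A factorization is an ordered list $(\phi_1)(\phi_2)\cdots(\phi_k)$ of nonempty words, called its parts (factors). $n_{i,j,k}$ denotes the number of factorizations over the alphabet $\{a,b\}$ with exactly $k$ parts, using exactly $i$ copies of $a$ and $j$ copies of $b$ in total, such that each part is a Carlitz word. (For example, $n_{2,5,3}=6$.) *)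

(* Defs.v *)
From mathcomp Require Import all_boot all_order all_algebra.
Set Implicit Arguments. Unset Strict Implicit. Unset Printing Implicit Defensive.
Import Order.TTheory GRing.Theory Num.Theory.
Local Open Scope ring_scope.

(* l_k(t) = (-1)^k L_k^{(-1)}(t)
          = (-1)^k \sum_{i=0}^k (-1)^i binom(k-1, k-i) t^i / i!.
   For k = 0 the generalized binomial binom(-1,0) = 1 = 'C(0,0), and the
   truncated nat predecessor 0.-1 = 0 gives exactly this value; for k >= 1
   all binomials are ordinary ones. *)
Definition lpoly (k : nat) : {poly rat} :=
  \sum_(i < k.+1)
     (((-1) ^+ (k + i) * ('C(k.-1, k - i))%:R / (i`!)%:R) *: 'X^i).

(* Words over the alphabet {a,b}: a is encoded by false, b by true. *)
Definition word := seq bool.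

Definition carlitz (w : word) : bool := sorted (fun x y => x != y) w.

Definition words_of_size (m : nat) : seq word :=
  [seq tval t | t : m.-tuple bool].

Definition words_upto (n : nat) : seq word :=
  flatten [seq words_of_size m | m <- iota 1 n].

Fixpoint cands (n k : nat) : seq (seq word) :=
  if k is k'.+1 then [seq w :: f | w <- words_upto n, f <- cands n k']
  else [:: [::]].

Definition is_carlitz_fact (i j k : nat) (f : seq word) : bool :=
  [&& size f == k, all (fun w => (w != [::]) && carlitz w) f,
      count (pred1 false) (flatten f) == i &
      count (pred1 true) (flatten f) == j].

(* n_{i,j,k}: every such factorization has total length i+j, so all its
   parts have length in [1, i+j] and it lies in cands (i+j) k. *)
Definition nfact (i j k : nat) : nat :=
  count (is_carlitz_fact i j k) (cands (i + j) k).

(* Main.v *)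
Require Import Defs.
From mathcomp Require Import all_boot all_order all_algebra zify ring.

Definition cf (w : word) := count (pred1 false) w.
Definition ct (w : word) := count (pred1 true) w.
Fixpoint alt (b : bool) (m : nat) : word :=
  if m is m'.+1 then b :: alt (~~ b) m' else [::].

Lemma size_alt b m : size (alt b m) = m.
Proof. by elim: m b => //= m IH b; rewrite IH. Qed.

Lemma cf_ct w : (cf w + ct w = size w)%N.
Proof. elim: w => //= x w IH; rewrite /cf /ct /= in IH *; case: x; lia. Qed.

Lemma count_sumn (T : Type) (P : pred T) (s : seq T) :
  count P s = \sum_(x <- s) (P x : nat).
Proof. by elim: s => [|x s IH]; rewrite ?big_nil ?big_cons //= IH. Qed.

Lemma big_flatten_nat (T : Type) (ss : seq (seq T)) (F : T -> nat) :
  \sum_(x <- flatten ss) F x = \sum_(s <- ss) \sum_(x <- s) F x.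
Proof. by elim: ss => [|s ss IH]; rewrite ?big_nil //= big_cat big_cons IH. Qed.

Definition okw (w : word) := (w != [::]) && carlitz w.

Lemma icf_cons i j k w f :
  is_carlitz_fact i j k.+1 (w :: f) =
  (okw w && (cf w <= i) && (ct w <= j)) && is_carlitz_fact (i - cf w) (j - ct w) k f.
Proof.
rewrite /is_carlitz_fact /okw /= !count_cat -/(cf w) -/(ct w) eqSS.
set a := count _ (flatten f); set b := count _ (flatten f).
have E : forall x y z : nat, (x + y == z) = (x <= z) && (y == z - x).
  move=> x y z; apply/eqP/andP => [<-|[h /eqP ->]].
  by split; [apply: leq_addr | rewrite addKn].
  by rewrite subnKC.
rewrite !E.
set P1 := size f == k; set P2 := (w != [::]) && carlitz w; set P3 := all _ f.
case: P1; case: P2; case: P3 => /=; rewrite ?andbF //. by case: (cf w <= i); case: (ct w <= j) => /=; rewrite ?andbF.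
Qed.

Definition G (i j k : nat) (w : word) : nat :=
  if (cf w <= i) && (ct w <= j) then nfact (i - cf w) (j - ct w) k else 0.

Lemma sum_words_upto (H : word -> nat) n :
  \sum_(w <- words_upto n) H w =
  \sum_(1 <= m < n.+1) \sum_(t : m.-tuple bool) H t.
Proof.
rewrite /words_upto big_flatten_nat big_map /index_iota subn1 /=.
by apply: eq_bigr => m _; rewrite /words_of_size big_image.
Qed.

Lemma sum_words_trunc (H : word -> nat) n N :
  (forall w, N < size w -> H w = 0) -> N <= n ->
  \sum_(w <- words_upto n) H w = \sum_(w <- words_upto N) H w.
Proof.
move=> HN le; rewrite !sum_words_upto (@big_cat_nat _ _ _ N.+1) //=.
rewrite [X in _ + X]big1_seq ?addn0 // => m /andP[_].
rewrite mem_index_iota => /andP[h _].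
by rewrite big1 // => t _; apply: HN; rewrite size_tuple.
Qed.

Lemma carlitz_alt_gen b m : path (fun x y => x != y) b (alt (~~ b) m).
Proof.
elim: m b => //= m IH b; rewrite negbK.
by case: b IH => IH /=; rewrite IH.
Qed.

Lemma carlitz_alt b m : carlitz (alt b m).
Proof. by case: m => //= m; rewrite /carlitz /=; exact: carlitz_alt_gen. Qed.

Lemma carlitz_eq w : carlitz w -> w = alt (head false w) (size w).
Proof.
elim: w => //= x w IH; rewrite /carlitz /=.
case: w IH => //= y w IH /andP[xy p].
have e : ~~ x = y by case: x y xy {IH p} => [] [].
move: IH p; rewrite -e negbK => IH p; by rewrite /= -IH.
Qed.

Lemma sum_tuples (F : word -> nat) m :
  \sum_(t : m.+1.-tuple bool) (okw t * F t) = F (alt false m.+1) + F (alt true m.+1).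
Proof.
have s0 : size (alt false m.+1) == m.+1 by rewrite size_alt.
have s1 : size (alt true m.+1) == m.+1 by rewrite size_alt.
pose T0 := Tuple s0; pose T1 := Tuple s1.
rewrite (bigD1 T0) //= (bigD1 T1) //=.
have ok0 : okw (false :: alt true m) by have := carlitz_alt false m.+1.
have ok1 : okw (true :: alt false m) by have := carlitz_alt true m.+1.
rewrite ok0 ok1 !mul1n big1 ?addn0 // => t /andP[n0 n1].
case okt: (okw t) => //=.
move: okt => /andP[ne c].
have := @carlitz_eq t c; rewrite size_tuple.
case E: (tval t) ne => //= [x w] _; case: x E => E e.
- by case/eqP: n1; apply: val_inj => /=; rewrite E e.
- by case/eqP: n0; apply: val_inj => /=; rewrite E e.
Qed.

Lemma candsS n k : cands n k.+1 = [seq w :: f | w <- words_upto n, f <- cands n k].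
Proof. by []. Qed.

Lemma sum_andb (T : Type) (s : seq T) (b : bool) (P : pred T) :
  \sum_(x <- s) ((b && P x) : nat) = b * \sum_(x <- s) (P x : nat).
Proof. by case: b; rewrite ?mul1n ?mul0n // big1. Qed.

Lemma cnt_indep k : forall a b n, a + b <= n ->
  count (is_carlitz_fact a b k) (cands n k) = nfact a b k.
Proof.
elim: k => [//|k IH] a b n le.
have H : forall n', a + b <= n' ->
  count (is_carlitz_fact a b k.+1) (cands n' k.+1)
  = \sum_(w <- words_upto n') (okw w && (cf w <= a) && (ct w <= b)) * nfact (a - cf w) (b - ct w) k.
  move=> n' le'; rewrite candsS count_sumn big_allpairs_dep; apply: eq_bigr => w _.
  under eq_bigr => f _ do rewrite icf_cons.
  rewrite sum_andb -count_sumn IH //; lia.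
rewrite /nfact !H // (@sum_words_trunc _ n (a + b)) // => w lt.
case: (okw w) => //=; have := cf_ct w.
case h1: (cf w <= a); case h2: (ct w <= b) => //= e; lia.
Qed.

Lemma nfactS i j k :
  nfact i j k.+1 = \sum_(1 <= m < (i + j).+1) (G i j k (alt false m) + G i j k (alt true m)).
Proof.
rewrite {1}/nfact candsS count_sumn big_allpairs_dep.
have -> : \sum_(w <- words_upto (i + j)) \sum_(f <- cands (i + j) k) (is_carlitz_fact i j k.+1 (w :: f) : nat)
  = \sum_(w <- words_upto (i + j)) okw w * G i j k w.
  apply: eq_bigr => w _.
  under eq_bigr => f _ do rewrite icf_cons.
  rewrite sum_andb -count_sumn /G.
  case: (okw w); case h1: (cf w <= i); case h2: (ct w <= j); rewrite ?muln0 ?mul0n //= mul1n cnt_indep //; lia.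
rewrite sum_words_upto big_nat_cond [RHS]big_nat_cond.
apply: eq_bigr => m /andP[/andP[h _] _].
by case: m h => // m _; rewrite sum_tuples.
Qed.

Lemma G_shift i j k b s : G i.+1 j.+1 k (b :: ~~ b :: s) = G i j k s.
Proof. by rewrite /G /cf /ct; case: b => /=; rewrite ?add0n ?addn0 !add1n !ltnS !subSS. Qed.

Lemma G0l j k b s : G 0 j k (b :: ~~ b :: s) = 0.
Proof. by rewrite /G /cf /ct; case: b. Qed.

Lemma G0r i k b s : G i 0 k (b :: ~~ b :: s) = 0.
Proof. by rewrite /G /cf /ct; case: b => /=; rewrite andbF. Qed.

Lemma nfact0 i j : nfact i j 0 = ((i == 0) && (j == 0)).
Proof. by rewrite /nfact /= /is_carlitz_fact /= !(eq_sym 0); case: (i == 0); case: (j == 0). Qed.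

Lemma altSS b m : alt b m.+2 = b :: ~~ b :: alt b m.
Proof. by rewrite /= negbK. Qed.

Lemma nfactS' i j k :
  nfact i j k.+1 = \sum_(m < i + j) (G i j k (alt false m.+1) + G i j k (alt true m.+1)).
Proof. by rewrite nfactS big_add1 /= big_mkord. Qed.

Lemma rec_ij i j k :
  nfact i.+1 j.+1 k.+1 = nfact i j k.+1 + nfact i j.+1 k + nfact i.+1 j k + 2 * nfact i j k.
Proof.
rewrite nfactS' [in RHS]nfactS' !addSn addnS !big_ord_recl /=.
under eq_bigr => m _ do rewrite add0n (G_shift _ _ _ false) (G_shift _ _ _ true).
rewrite /G /cf /ct /= !subn1 !subn0 /=; lia.
Qed.

Lemma rec_0j j k : nfact 0 j.+1 k.+1 = nfact 0 j k.
Proof.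
rewrite nfactS' add0n big_ord_recl big1 => [|m _]; last by rewrite altSS !G0l.
by rewrite /G /cf /ct /= subn1 subn0 addn0.
Qed.

Lemma rec_i0 i k : nfact i.+1 0 k.+1 = nfact i 0 k.
Proof.
rewrite nfactS' addn0 big_ord_recl big1 => [|m _]; last by rewrite altSS !G0r.
by rewrite /G /cf /ct /= subn1 ?subn0 !addn0.
Qed.

Lemma nfact00 k : nfact 0 0 k.+1 = 0.
Proof. by rewrite nfactS' big_ord0. Qed.

Lemma nfact_0l j k : nfact 0 j k = (j == k).
Proof.
elim: k j => [|k IH] [|j]; rewrite ?nfact0 ?nfact00 ?rec_0j ?IH //.
Qed.

Lemma nfact_0r i k : nfact i 0 k = (i == k).
Proof.
elim: k i => [|k IH] [|i]; rewrite ?nfact0 ?nfact00 ?rec_i0 ?IH ?andbT //.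
Qed.

Lemma nfact_van k : forall i j, i + j < k -> nfact i j k = 0.
Proof.
elim: k => [//|k IH] i j lt; rewrite nfactS' big1 // => m _.
have h : forall b, G i j k (alt b m.+1) = 0.
  move=> b; rewrite /G; case: ifP => // /andP[h1 h2]; apply: IH.
  have := cf_ct (alt b m.+1); rewrite size_alt; lia.
by rewrite !h.
Qed.

Import GRing.Theory Num.Theory.
Local Open Scope ring_scope.

Lemma lpoly_coef k n : (lpoly k)`_n =
  if (n <= k)%N then (-1) ^+ (k + n) * ('C(k.-1, k - n))%:R / (n`!)%:R else 0.
Proof.
by rewrite /lpoly -(poly_def k.+1 (fun i => (-1) ^+ (k + i) * ('C(k.-1, k - i))%:R / (i`!)%:R)) coef_poly ltnS.
Qed.

Lemma lpoly0 : lpoly 0 = 1.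
Proof.
apply/polyP => n; rewrite lpoly_coef coefC.
case: n => [|n] /=; last by [].
by rewrite expr0 mul1r bin0.
Qed.

Lemma lpoly_at0 k : (lpoly k)`_0 = (k == 0)%:R.
Proof.
rewrite lpoly_coef /= subn0; case: k => [|k]; first by rewrite expr0 mul1r bin0.
by rewrite bin_small // mulr0 mul0r.
Qed.

Lemma fact_neq0 n : (n`!)%:R != 0 :> rat.
Proof. by rewrite pnatr_eq0 -lt0n fact_gt0. Qed.

Lemma mulrn_div (x : rat) n : x *+ n = x * n%:R.
Proof. by rewrite mulr_natr. Qed.

Lemma lpoly_deriv k : (lpoly k.+1)^`() + (lpoly k)^`() = lpoly k.
Proof.
apply/polyP => n; rewrite coefD !coef_deriv !lpoly_coef ltnS.
case: (ltngtP n k) => h.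
- have [d ->] : exists d, k = (n + d.+1)%N by exists (k - n.+1)%N; lia.
  have e1 : ((n + d.+1).+1 - n.+1 = d.+1)%N by lia.
  have e2 : ((n + d.+1) - n.+1 = d)%N by lia.
  have e3 : ((n + d.+1) - n = d.+1)%N by lia.
  have e4 : (n.+1 <= n + d.+1)%N by lia.
  rewrite e1 e2 e3 !addnS /= binS factS !natrM natrD !(mulrn_div (_ / _)) !addSn ?addnS !exprS.
  have := fact_neq0 n; have : (n.+1)%:R != 0 :> rat by rewrite pnatr_eq0.
  move=> h1 h2; field; by rewrite nat1r h1 h2.
- by rewrite mul0rn addr0.
- subst; rewrite mul0rn addr0 subSS !subnn !bin0 factS natrM !(mulrn_div (_ / _)).
  have e5 : (k.+1 + k.+1 = (k + k).+2)%N by lia.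
  rewrite e5 !exprS.
  have := fact_neq0 k; have : (k.+1)%:R != 0 :> rat by rewrite pnatr_eq0.
  move=> h1 h2; field; by rewrite ?nat1r ?h1 ?h2.
Qed.

Lemma deriv_inj (p q : {poly rat}) : p^`() = q^`() -> p`_0 = q`_0 -> p = q.
Proof.
move=> H H0; apply/polyP => [[|n]] //.
have := congr1 (fun r : {poly rat} => r`_n) H; rewrite !coef_deriv => /eqP.
by rewrite -subr_eq0 -mulrnBl mulrn_eq0 /= subr_eq0 => /eqP.
Qed.

Lemma lpoly_deriv0 : (lpoly 0)^`() = 0.
Proof. by rewrite lpoly0 derivC. Qed.

Definition R (i j N : nat) : {poly rat} := \sum_(k < N) (nfact i j k)%:R *: lpoly k.

Lemma R_ext i j d : R i j ((i + j).+1 + d) = R i j (i + j).+1.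
Proof.
elim: d => [|d IH]; first by rewrite addn0.
by rewrite /R addnS big_ord_recr /= -/(R _ _ _) IH nfact_van ?scale0r ?addr0 //; lia.
Qed.

Lemma tele (M r : nat -> rat) N :
  (forall k, M k.+1 = r k + r k.+1) ->
  \sum_(k < N.+1) M k *: (lpoly k)^`() =
  \sum_(k < N) r k *: lpoly k + r N *: (lpoly N)^`().
Proof.
move=> HM; elim: N => [|N IH].
  by rewrite big_ord1 big_ord0 lpoly_deriv0 !scaler0 add0r.
rewrite big_ord_recr /= IH big_ord_recr /= HM scalerDl.
rewrite -!addrA; congr (_ + _); rewrite addrA -scalerDr (addrC (lpoly N)^`()) lpoly_deriv.
by [].
Qed.

Lemma dR i j N : (R i j N)^`() = \sum_(k < N) (nfact i j k)%:R *: (lpoly k)^`().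
Proof. by rewrite /R raddf_sum; apply: eq_bigr => k _; exact: derivZ. Qed.

Lemma Rrel i j : let N := (i + j).+2 in
  (R i.+1 j.+1 N.+1)^`() = R i j.+1 N.+1 + R i.+1 j N.+1 + R i j N.+1 *+ 2
    - (R i j.+1 N.+1)^`() - (R i.+1 j N.+1)^`() - (R i j N.+1)^`().
Proof.
move=> N.
pose M k := (nfact i.+1 j.+1 k + nfact i j.+1 k + nfact i.+1 j k + nfact i j k)%:R : rat.
pose r k := (nfact i j.+1 k + nfact i.+1 j k + 2 * nfact i j k)%:R : rat.
have HM : forall k, M k.+1 = r k + r k.+1.
  by move=> k; rewrite /M /r rec_ij -natrD; congr (_%:R); lia.
have rN : r N = 0 by rewrite /r !nfact_van //; lia.
have T := tele M r N HM; rewrite rN scale0r addr0 in T.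
have T2 : \sum_(k < N) r k *: lpoly k = \sum_(k < N.+1) r k *: lpoly k.
  by rewrite [RHS]big_ord_recr /= rN scale0r addr0.
rewrite T2 in T.
have L : \sum_(k < N.+1) M k *: (lpoly k)^`() =
  (R i.+1 j.+1 N.+1)^`() + (R i j.+1 N.+1)^`() + (R i.+1 j N.+1)^`() + (R i j N.+1)^`().
  rewrite !dR -!big_split; apply: eq_bigr => k _; by rewrite /M !natrD !scalerDl.
have Rr : \sum_(k < N.+1) r k *: lpoly k = R i j.+1 N.+1 + R i.+1 j N.+1 + R i j N.+1 *+ 2.
  rewrite /R -sumrMnl -!big_split; apply: eq_bigr => k _.
  by rewrite /r !natrD !scalerDl scale0r addr0 /= mulr2n.
rewrite L Rr in T.
rewrite -T; ring.
Qed.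

Lemma bnd0 j : lpoly 0 * lpoly j = R 0 j (0 + j).+1.
Proof.
rewrite lpoly0 mul1r add0n /R big_ord_recr /= big1 => [|k _].
  by rewrite add0r nfact_0l eqxx scale1r.
by rewrite nfact_0l; case: eqP => [e|_]; [have := ltn_ord k; rewrite -e ltnn | rewrite scale0r].
Qed.

Lemma bndr i : lpoly i * lpoly 0 = R i 0 (i + 0).+1.
Proof.
rewrite lpoly0 mulr1 addn0 /R big_ord_recr /= big1 => [|k _].
  by rewrite add0r nfact_0r eqxx scale1r.
by rewrite nfact_0r; case: eqP => [e|_]; [have := ltn_ord k; rewrite -e ltnn | rewrite scale0r].
Qed.

Lemma main s : forall i j, (i + j <= s)%N -> lpoly i * lpoly j = R i j (i + j).+1.
Proof.
elim: s => [|s IH] [|i] [|j] le; rewrite ?bnd0 ?bndr //.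
have e1 : lpoly i * lpoly j.+1 = R i j.+1 (i + j).+3.
  rewrite IH; last by lia.
  by rewrite -(R_ext i j.+1 1); congr R; lia.
have e2 : lpoly i.+1 * lpoly j = R i.+1 j (i + j).+3.
  rewrite IH; last by lia.
  by rewrite -(R_ext i.+1 j 1); congr R; lia.
have e3 : lpoly i * lpoly j = R i j (i + j).+3.
  rewrite IH; last by lia.
  by rewrite -(R_ext i j 2); congr R; lia.
rewrite addSn addnS.
apply: deriv_inj.
  rewrite Rrel -e1 -e2 -e3 !derivM.
  have di : forall m, (lpoly m.+1)^`() = lpoly m - (lpoly m)^`().
    by move=> m; apply: (addIr ((lpoly m)^`())); rewrite subrK lpoly_deriv.
  rewrite !di; ring.
rewrite coef0M !lpoly_at0 mulr0 /R coef_sum big_ord_recl nfact0 /= scale0r coef0 add0r.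
by rewrite big1 // => k _; rewrite coefZ lpoly_at0 mulr0.
Qed.

Theorem lemma2p3 (i j : nat) :
  lpoly i * lpoly j = \sum_(k < (i + j).+1) (nfact i j k)%:R *: lpoly k.
Proof. exact: (@main (i + j) i j (leqnn _)). Qed.
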